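(* Let $Z$ be a completely Hausdorff topological space and $H:\mathbb R\times Z\to Z$ a continuous locally free action of $\mathbb R$ on $Z$. Then every point $x\in Z$ admits a neighborhood $U$ and a homeomorphism $U\cong I\times T$, where $I\subset\mathbb R$ is a neighborhood of $0$ and $T$ is a topological space, with $x$ corresponding to some $(0,\tau_0)$, such that in these coordinates the action is given by $t\cdot(s,\tau)=(t+s,\tau)$ for $(t,(s,\tau))$ in a neighborhood of $(0,(0,\tau_0))$ in $\mathbb R\times U$. Moreover, for two such coordinate systems, the change of coordinates is of the form $(s,\tau)\mapsto(s+s_\tau,\tau'(\tau))$ where $\tau\mapsto s_\tau$ and $\tau\mapsto\tau'(\tau)$ are continuous; in particular these charts give $Z$ the structure of an oriented lamination by one-dimensional Lipschitz manifolds.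
   Context: A space is completely Hausdorff if any two distinct points can be separated by a continuous real-valued function. The action is locally free if for every $z\in Z$ there is $\eta>0$ such that $H(t,z)=z$ with $|t|<\eta$ implies $t=0$. *)

(* Defs.v *)
From HB Require Import structures.
From mathcomp Require Import all_boot all_order all_algebra.
From mathcomp Require Import all_classical all_reals all_analysis.
Set Implicit Arguments. Unset Strict Implicit. Unset Printing Implicit Defensive.
Import Order.TTheory GRing.Theory Num.Theory.
Import numFieldNormedType.Exports.
Local Open Scope classical_set_scope.
Local Open Scope ring_scope.

Definition completely_hausdorff (R : realType) (Z : topologicalType) : Prop :=
  forall x y : Z, x <> y ->
    exists f : Z -> R, continuous f /\ f x <> f y.

Definition is_R_action (R : realType) (Z : topologicalType)
  (H : R * Z -> Z) : Prop :=
  (forall z, H (0, z) = z) /\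
  (forall (t s : R) z, H (t + s, z) = H (t, H (s, z))).

Definition locally_free (R : realType) (Z : topologicalType)
  (H : R * Z -> Z) : Prop :=
  forall z : Z, exists2 eta : R, 0 < eta &
    forall t : R, `|t| < eta -> H (t, z) = z -> t = 0.

Definition flow_chart (R : realType) (Z : topologicalType)
  (H : R * Z -> Z) (T : topologicalType) (U : set Z) (I : set R)
  (phi : Z -> R * T) (psi : R * T -> Z) : Prop :=
  [/\ open U, open I & I 0] /\
  [/\ {within U, continuous phi} & {within I `*` [set: T], continuous psi}] /\
  (forall z, U z -> (I `*` [set: T]) (phi z) /\ psi (phi z) = z) /\
  (forall q, (I `*` [set: T]) q -> U (psi q) /\ phi (psi q) = q) /\
  (forall z, U z -> \forall tw \near ((0 : R), z),
      phi (H tw) = ((phi tw.2).1 + tw.1, (phi tw.2).2)).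

(* Main.v *)
Require Import Defs.
From HB Require Import structures.
From mathcomp Require Import all_boot all_order all_algebra.
From mathcomp Require Import all_classical all_reals all_analysis.
From mathcomp Require Import lra.
Set Implicit Arguments. Unset Strict Implicit. Unset Printing Implicit Defensive.
Import Order.TTheory GRing.Theory Num.Theory.
Import numFieldNormedType.Exports.
Local Open Scope classical_set_scope.
Local Open Scope ring_scope.


Lemma pairL_cont (X Y : topologicalType) (y : Y) : continuous (fun x : X => (x, y)).
Proof. move=> x; apply: cvg_pair; [exact: cvg_id|exact: cvg_cst]. Qed.
Lemma pairR_cont (X Y : topologicalType) (x : X) : continuous (fun y : Y => (x, y)).
Proof. move=> y; apply: cvg_pair; [exact: cvg_cst|exact: cvg_id]. Qed.
Lemma pairN_cont (R : realType) (Y : topologicalType) (y : Y) : continuous (fun x : R => (- x, y)).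
Proof.
move=> x; apply: (@continuous_comp _ _ _ (@GRing.opp R) (fun x => (x, y))).
  exact: oppr_continuous.
exact: pairL_cont.
Qed.
Lemma cont_init_pt (X Y : topologicalType) (A : set Y) (f : X -> set_type A) (z : X) :
  {for z, continuous (fun x => set_val (f x))} -> {for z, continuous f}.
Proof.
move=> cf U [?/= [[W oW <-]]] /= Wsfz /filterS; apply; apply: cf.
exact: open_nbhs_nbhs.
Qed.

Section Chart.
Context (R : realType) (Z : topologicalType) (H : R * Z -> Z).
Hypotheses (hH : continuous H) (hact : is_R_action H).
Variables (x : Z) (g : Z -> R) (W0 : set Z) (d : R).
Hypotheses (cg : continuous g) (oW0 : open W0) (W0x : W0 x) (d0 : 0 < d).
Hypothesis mono : forall w, W0 w -> forall s1 s2, -(2*d) <= s1 -> s1 < s2 -> s2 <= 2*d ->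
  g (H (s1, w)) < g (H (s2, w)).

Let H0 z : H (0, z) = z. Proof. by case: hact. Qed.
Let HD t s z : H (t + s, z) = H (t, H (s, z)). Proof. by case: hact. Qed.
Let HN s w : H (- s, H (s, w)) = w.
Proof. by rewrite -HD addNr H0. Qed.

Let c0 := g x.
Let Sset := [set w | W0 w /\ g w = c0].
Let Sx : Sset x. Proof. by split. Qed.
Local Notation S := (set_type Sset).
Let xS : S := SigSub (mem_set Sx).
Let Iset := [set s : R | `|s| < d].
Let psi (q : R * S) : Z := H (q.1, set_val q.2).
Let P z (q : R * S) := Iset q.1 /\ psi q = z.
Let phi z := xget (0, xS) (P z).
Let U := [set z | exists q, P z q].

Lemma uniqP z q1 q2 : P z q1 -> P z q2 -> q1 = q2.
Proof.
move: q1 q2 => [s1 w1] [s2 w2] [/= I1 e1] [/= I2 e2].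
have hw1 : set_val w1 = H (s2 - s1, set_val w2).
  by rewrite -(HN s1 (set_val w1)) /psi/= in e1 *; rewrite e1 -e2 addrC HD.
have Sw1 := set_valP w1; have Sw2 := set_valP w2.
have s12 : s1 = s2.
  apply/eqP; apply/negPn/negP => ne.
  have W2 : W0 (set_val w2) by case: Sw2.
  have gw : g (H (s2 - s1, set_val w2)) = g (H (0, set_val w2)).
    by rewrite -hw1 H0; case: Sw1 => _ ->; case: Sw2 => _ ->.
  move: I1 I2; rewrite /Iset/= !ltr_norml => /andP[a1 b1] /andP[a2 b2].
  case: (ltgtP (s2 - s1) 0) => [lt|gt|eq].
  - have h1 : -(2*d) <= s2 - s1 by lra.
    have h2 : 0 <= 2 * d by lra.
    by have := mono W2 h1 lt h2; rewrite gw ltxx.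
  - have h1 : -(2*d) <= 0 by lra.
    have h2 : s2 - s1 <= 2 * d by lra.
    by have := mono W2 h1 gt h2; rewrite gw ltxx.
  - have e12 : s1 = s2 by lra.
    by rewrite e12 eqxx in ne.
rewrite -s12 subrr H0 in hw1.
by rewrite s12; congr pair; apply: val_inj.
Qed.


Lemma phiP z : U z -> P z (phi z).
Proof. by move=> Uz; apply: xgetPex. Qed.

Lemma phi_eq z q : P z q -> phi z = q.
Proof. by move=> Pzq; apply: (@uniqP z) => //; apply: phiP; exists q. Qed.

Lemma gHc (s : R) : continuous (fun z => g (H (s, z))).
Proof.
move=> z; apply: continuous_comp; last exact: cg.
apply: continuous_comp; last exact: hH.
exact: pairR_cont.
Qed.

Lemma gHs (z : Z) : continuous (fun s : R => g (H (- s, z))).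
Proof.
move=> s; apply: continuous_comp; last exact: cg.
apply: continuous_comp; last exact: hH.
exact: pairN_cont.
Qed.

Lemma loc z : U z -> forall e, 0 < e ->
  \forall z' \near z, U z' /\ `|(phi z').1 - (phi z).1| < e.
Proof.
move=> Uz e e0.
have [Iz Pz] := phiP Uz.
move: Iz Pz; case Ephi : (phi z) => [s0 w0] /= Iz Pz.
have Hw0 : H (- s0, z) = set_val w0 by rewrite -Pz /psi/= HN.
have W0w0 : W0 (set_val w0) by have [] := set_valP w0.
have gw0 : g (set_val w0) = c0 by have [] := set_valP w0.
have nW : \forall p \near (- s0, z), W0 (H p).
  by apply: hH; rewrite Hw0; exact: open_nbhs_nbhs.
case: nW => -[A B] /= [nA nB] sAB.
case/nbhs_ballP: nA => r' r'0 bA.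
pose m := Num.min (Num.min e (d - `|s0|)) r'.
have m1 : m <= e by rewrite /m !ge_min lexx.
have m2 : m <= d - `|s0| by rewrite /m !ge_min lexx orbT.
have m3 : m <= r' by rewrite /m !ge_min lexx orbT.
have m0 : 0 < m by rewrite /m !lt_min e0 r'0 subr_gt0 Iz.
pose rho := m / 2.
have rho0 : 0 < rho by rewrite divr_gt0.
have rhom : rho < m by rewrite /rho ltr_pdivrMr// ltr_pMr// ltr1n.
have ns0 : 0 <= `|s0| := normr_ge0 s0.
have ns1 : s0 <= `|s0| := ler_norm s0.
have ns2 : - s0 <= `|s0| by rewrite -normrN ler_norm.
have hs0 : `|s0| < d := Iz; rewrite ltr_norml in hs0; case/andP: hs0 => hs0l hs0r.
have k1z : c0 < g (H (- (s0 - rho), z)).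
  rewrite opprB -[in X in H (_, X)]Pz /psi/= -HD addrNK -gw0.
  rewrite -{1}(H0 (set_val w0)); apply: mono => //; lra.
have k2z : g (H (- (s0 + rho), z)) < c0.
  rewrite -[in X in H (_, X)]Pz /psi/= -HD -gw0.
  have -> : - (s0 + rho) + s0 = - rho by lra.
  rewrite -{2}(H0 (set_val w0)); apply: mono => //; lra.
have FZ : Filter (nbhs z) := nbhs_filter z.
have F1 : \forall z' \near z, c0 < g (H (- (s0 - rho), z')).
  exact: (cvgr_gt _ (@gHc (- (s0 - rho)) z) _ k1z).
have F2 : \forall z' \near z, g (H (- (s0 + rho), z')) < c0.
  exact: (cvgr_lt _ (@gHc (- (s0 + rho)) z) _ k2z).
have F3 := @filterI Z (nbhs z) FZ _ _ F1 (@filterI Z (nbhs z) FZ _ _ F2 nB).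
apply: (@filterS Z (nbhs z) FZ _ _ _ F3) => z' [h1 [h2 h3]].
have cf : {within `[s0 - rho, s0 + rho], continuous (fun s => g (H (- s, z')))}.
  by apply: continuous_subspaceT; exact: gHs.
have hab : s0 - rho <= s0 + rho by lra.
have hv : Num.min (g (H (- (s0 - rho), z'))) (g (H (- (s0 + rho), z'))) <= c0 <=
   Num.max (g (H (- (s0 - rho), z'))) (g (H (- (s0 + rho), z'))).
  rewrite ge_min le_max; apply/andP; split; apply/orP; [right|left]; exact: ltW.
have [c cI gc] := IVT hab cf hv.
rewrite in_itv/= in cI; case/andP: cI => cl cr.
have W0w : W0 (H (- c, z')).
  apply: (sAB (- c, z')); split => //=; apply: bA.
  rewrite /ball/= ltr_norml; lra.
have Sw : Sset (H (- c, z')) by split.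
pose wS : S := SigSub (mem_set Sw).
have Pz' : P z' (c, wS).
  split; first by rewrite /Iset/= ltr_norml; lra.
  by rewrite /psi/= -HD subrr H0.
split; first by exists (c, wS).
rewrite (phi_eq Pz')/= ltr_norml; lra.
Qed.

Lemma psi_cont : continuous psi.
Proof.
have c2 : continuous (fun q : R * S => set_val q.2).
  move=> q; apply: (@continuous_comp _ _ _ snd set_val); first exact: cvg_snd.
  exact: initial_continuous.
have c12 : continuous (fun q : R * S => (q.1, set_val q.2)).
  by move=> q; apply: (@cvg_pair _ _ _ (nbhs q) (nbhs q.1) (nbhs (set_val q.2))); [exact: cvg_fst| exact: c2].
move=> q; apply: (@continuous_comp _ _ _ (fun q : R * S => (q.1, set_val q.2)) H).
  exact: c12.
exact: hH.
Qed.

Lemma phi_cont z : U z -> {for z, continuous phi}.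
Proof.
move=> Uz.
have -> : phi = (fun z => ((phi z).1, (phi z).2)) by apply/funext => z'; case: (phi z').
have c1 : (fun z' => (phi z').1) @ z --> (phi z).1.
  apply/cvgrPdist_lt => e e0; move: (loc Uz e0).
  by apply: filterS => z' [_ h]; rewrite distrC.
apply: (@cvg_pair _ _ _ (nbhs z) (nbhs (phi z).1) (nbhs (phi z).2)); first exact: c1.
apply: (@cont_init_pt Z Z Sset (fun z => (phi z).2) z).
have E : \forall z' \near z, H (- (phi z').1, z') = set_val (phi z').2.
  move: (loc Uz ltr01); apply: filterS => z' [Uz' _].
  by have [_ e] := phiP Uz'; rewrite -[X in H (_, X)]e /psi HN.
have Ez : set_val (phi z).2 = H (- (phi z).1, z).
  by have [_ e] := phiP Uz; rewrite -[X in H (_, X)]e /psi HN.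
apply: cvg_trans (near_eq_cvg E) _.
rewrite Ez.
apply: continuous_comp; last exact: hH.
apply: (@cvg_pair _ _ _ (nbhs z) (nbhs (- (phi z).1)) (nbhs z)); last exact: cvg_id.
exact: cvgN.
Qed.


Lemma chart_main : exists (T : topologicalType) (U0 : set Z) (I0 : set R)
      (phi0 : Z -> R * T) (psi0 : R * T -> Z),
      [/\ U0 x, flow_chart H U0 I0 phi0 psi0 & (phi0 x).1 = 0].
Proof.
have Px : P x (0, xS) by split; [rewrite /Iset/= normr0| rewrite /psi/= H0].
have Ux : U x by exists (0, xS).
exists (S : topologicalType), U, Iset, phi, psi.
split => //; last by rewrite (phi_eq Px).
split; [split|split; [split|split; [|split]]].
- rewrite openE => z Uz; rewrite /interior.
  by move: (loc Uz ltr01); apply: filterS => z' [].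
- have -> : Iset = ball (0:R) d.
    by apply/funext => s; rewrite /ball/= sub0r normrN.
  exact: ball_open.
- by rewrite /Iset/= normr0.
- rewrite continuous_open_subspace.
    by move=> z /set_mem Uz; exact: (@phi_cont z Uz).
  rewrite openE => z Uz; rewrite /interior.
  by move: (loc Uz ltr01); apply: filterS => z' [].
- exact/continuous_subspaceT/psi_cont.
- by move=> z Uz; have [Iz e] := phiP Uz; split.
- move=> q [Iq _]; have Pq : P (psi q) q by [].
  by split; [exists q| exact: phi_eq].
- move=> z Uz.
  have [Iz ez] := phiP Uz.
  set s0 := (phi z).1.
  have hs0 : `|s0| < d := Iz.
  have m0 : 0 < (d - `|s0|) / 2 by rewrite divr_gt0// subr_gt0.
  set m := (d - `|s0|) / 2.
  have L := loc Uz m0.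
  exists (ball (0:R) m, [set z' | U z' /\ `|(phi z').1 - s0| < m]).
    by split; [exact: nbhsx_ballx| exact: L].
  move=> [t z'] /= [bt [Uz' hz']].
  have [Iz' e'] := phiP Uz'.
  apply: phi_eq; split.
    have ns1 : s0 <= `|s0| := ler_norm s0.
    have ns2 : - s0 <= `|s0| by rewrite -normrN ler_norm.
    have mE : m * 2 = d - `|s0| by rewrite /m divfK// pnatr_eq0.
    move: bt hz' Iz'; rewrite /ball/= /Iset/= sub0r normrN !ltr_norml.
    move=> /andP[? ?] /andP[? ?] _; apply/andP; split; lra.
  by rewrite /psi/= addrC HD; congr (H (_, _)); exact: e'.
Qed.

End Chart.

Section IntCont.
Context (R : realType) (Z : topologicalType).
Notation mu := (@lebesgue_measure R).


Lemma mab (a b : R) : a <= b -> mu `[a,b] = (b - a)%:E.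
Proof.
move=> ab. rewrite lebesgue_measure_itv/= lte_fin.
case: ltP => ba; first by rewrite EFinB.
have -> : b = a by apply/le_anti; rewrite ba ab.
by rewrite subrr.
Qed.

Lemma cint (h : R -> R) (a b : R) : continuous h -> mu.-integrable `[a,b] (EFin \o h).
Proof.
move=> ch; apply: continuous_compact_integrable; first exact: segment_compact.
exact: continuous_subspaceT.
Qed.

Lemma int_cont (G : R * Z -> R) (a b : R) : a <= b -> continuous G ->
  continuous (fun z => \int[mu]_(t in `[a,b]) G (t, z)).
Proof.
move=> ab cG z0.
have intG z : mu.-integrable `[a,b] (EFin \o (fun t => G (t, z))).
  apply: continuous_compact_integrable; first exact: segment_compact.
  apply: continuous_subspaceT => t.
  apply: (@continuous_comp _ _ _ (fun t => (t, z)) G); last exact: cG.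
  exact: pairL_cont.
apply/cvgrPdist_le => e e0.
have e'0 : 0 < e / (b - a + 1) by apply: divr_gt0 => //; rewrite ltr_pwDr// subr_ge0.
have tube : \forall z \near z0, `[a,b] `<=` (fun t => `|G (t, z0) - G (t, z)| < e / (b - a + 1)).
  have cov : near_covering `[a,b] by apply/compact_near_coveringP; exact: segment_compact.
  apply: (cov Z (nbhs z0) (fun z t => `|G (t, z0) - G (t, z)| < e / (b - a + 1))) => t _.
  have h1 := cG (t, z0).
  move/cvgrPdist_lt : h1 => /(_ (e / (b - a + 1) / 2)) h1.
  have := h1 (divr_gt0 e'0 (ltr0Sn _ 1)).
  case=> -[A B] /= [nA nB] sAB.
  exists (A, B) => //= -[x' i] /= [Ax Bi].
  have h2 := sAB (x', z0) (conj Ax (nbhs_singleton nB)).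
  have h3 := sAB (x', i) (conj Ax Bi).
  rewrite /= in h2 h3.
  rewrite -(subrKA (G (t, z0))) (le_lt_trans (ler_normD _ _))//.
  by rewrite (splitr (e / (b - a + 1))) ltrD// distrC.
have cGz z : continuous (fun t => G (t, z)).
  move=> t; apply: (@continuous_comp _ _ _ (fun t => (t, z)) G); last exact: cG.
  exact: pairL_cont.
move: tube; apply: filterS => z Hz.
rewrite -RintegralB//.
apply: (le_trans (le_normr_Rintegral _ _)) => //.
  by apply: cint => t; apply: continuousB; apply: cGz.
apply: (@le_trans _ _ (\int[mu]_(t in `[a,b]) (e / (b - a + 1)))).
  apply: le_Rintegral => //.
  - by apply: cint => t; apply: cvg_norm; apply: continuousB; apply: cGz.
  - by apply: cint => t; exact: cvg_cst.
  by move=> t tab; apply: ltW; apply: Hz.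
rewrite Rintegral_cst// (_ : fine _ = b - a); last exact: (congr1 fine (mab ab)).
have ab1 : 0 < b - a + 1 by rewrite ltr_pwDr// subr_ge0.
rewrite mulrAC ler_pdivrMr// ler_wpM2l ?ltW// ?ltrDl//.
Qed.
End IntCont.

Section IntMono. Context (R : realType).
Notation mu := (@lebesgue_measure R).
Lemma derivable_shift_fn (f : R -> R) (k x : R) :
  derivable f (x + k) 1 -> derivable (fun t => f (t + k)) x 1.
Proof.
rewrite /derivable /=.
suff -> : (fun h : R => h^-1 *: (f (h *: 1 + x + k) - f (x + k))) =
  (fun h => h^-1 *: (f (h *: 1 + (x + k)) - f (x + k))) by [].
by apply/funext => h; rewrite addrA.
Qed.
Lemma derive1_shift_fn (f : R -> R) (k x : R) :
  derive1 (fun t => f (t + k)) x = derive1 f (x + k).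
Proof.
rewrite /derive1 /=.
suff -> : (fun h : R => h^-1 *: (f (h + x + k) - f (x + k))) =
  (fun h => h^-1 *: (f (h + (x + k)) - f (x + k))) by [].
by apply/funext => h; rewrite addrA.
Qed.



Definition Pf (phi : R -> R) (a x : R) := \int[mu]_(t in `[a, x]) phi t.

Lemma ltrDl1 (u : R) : u < u + 1. Proof. by rewrite ltrDl. Qed.
Lemma P_deriv (phi : R -> R) (a u : R) : continuous phi -> a < u ->
  derivable (Pf phi a) u 1 /\ derive1 (Pf phi a) u = phi u.
Proof.
move=> cphi au.
have := @continuous_FTC1_closed R phi a u (u + 1) (ltrDl1 u) _ au.
by apply; [exact: cint| exact: cphi].
Qed.

Lemma P_cont (phi : R -> R) (a u : R) : continuous phi -> a < u ->
  {for u, continuous (Pf phi a)}.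
Proof.
move=> cphi au; apply: differentiable_continuous.
by apply/derivable1_diffP; case: (P_deriv cphi au).
Qed.

Lemma int_shift (phi : R -> R) (a s e : R) : continuous phi -> a < s -> 0 < e ->
  \int[mu]_(t in `[0, e]) phi (t + s) = Pf phi a (e + s) - Pf phi a s.
Proof.
move=> cphi aS e0.
have cf : continuous (fun t => phi (t + s)).
  move=> t; apply: continuous_comp; last exact: cphi.
  by apply: cvgD; [exact: cvg_id|exact: cvg_cst].
have h := @continuous_FTC2 R (fun t => phi (t + s)) (fun t => Pf phi a (t + s)) 0 e e0.
have dP (t : R) : 0 <= t -> derivable (fun t => Pf phi a (t + s)) t 1 /\ derive1 (fun t => Pf phi a (t + s)) t = phi (t + s).
  move=> t0; have ats : a < t + s by rewrite (lt_le_trans aS)// lerDr.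
  have [d1 d2] := P_deriv cphi ats.
  by split; [exact: derivable_shift_fn| rewrite derive1_shift_fn].
have cP (t : R) : 0 <= t -> {for t, continuous (fun t => Pf phi a (t + s))}.
  move=> t0; apply: differentiable_continuous.
  by apply/derivable1_diffP; case: (dP t t0).
rewrite /Rintegral h ?add0r//.
- exact: continuous_subspaceT.
- split.
  + by move=> t; rewrite in_itv/= => /andP[t0 _]; case: (dP t (ltW t0)).
  + by apply: cvg_at_right_filter; apply: cP.
  + by apply: cvg_at_left_filter; apply: cP; exact: ltW.
- by move=> t; rewrite in_itv/= => /andP[t0 _]; case: (dP t (ltW t0)).
Qed.

Lemma int_mono (phi : R -> R) (e d : R) : continuous phi -> 0 < e -> 0 < d ->
  (forall s, -d <= s <= d -> phi s < phi (s + e)) ->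
  forall s1 s2, -d <= s1 -> s1 < s2 -> s2 <= d ->
  \int[mu]_(t in `[0, e]) phi (t + s1) < \int[mu]_(t in `[0, e]) phi (t + s2).
Proof.
move=> cphi e0 d0 hphi s1 s2 ds1 s12 s2d.
have ad : -d - 1 < -d by rewrite ltrBlDr ltrDl.
set a := -d - 1.
have as1 : a < s1 by exact: lt_le_trans ds1.
have as2 : a < s2 by rewrite (lt_le_trans ad)// (le_trans ds1)// ltW.
rewrite (@int_shift phi a s1 e)// (@int_shift phi a s2 e)//.
rewrite ![e + _]addrC.
pose f := (fun s => Pf phi a (s + e)) - Pf phi a.
have dP1 (s : R) : -d <= s -> derivable (fun s => Pf phi a (s + e)) s 1 /\
   derive1 (fun s => Pf phi a (s + e)) s = phi (s + e).
  move=> ds; have ats : a < s + e.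
    apply: (lt_le_trans ad); apply: (le_trans ds); rewrite lerDl; exact: ltW.
  have [d1 d2] := P_deriv cphi ats.
  by split; [exact: derivable_shift_fn| rewrite derive1_shift_fn].
have dP2 (s : R) : -d <= s -> derivable (Pf phi a) s 1 /\
   derive1 (Pf phi a) s = phi s.
  move=> ds; apply: P_deriv => //; exact: (lt_le_trans ad ds).
have df (s : R) : -d <= s -> derivable f s 1 /\ derive1 f s = phi (s + e) - phi s.
  move=> ds; have [a1 a2] := dP1 s ds; have [b1 b2] := dP2 s ds.
  split; first exact: (derivableB a1 b1).
  rewrite derive1E (deriveB a1 b1) -!derive1E a2 b2.
  done.
have := @gtr0_derive1_incr R f (-d) d.
apply.
- by move=> t; rewrite in_itv/= => /andP[dt _]; case: (df t (ltW dt)).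
- move=> t; rewrite in_itv/= => /andP[dt td]; have [_ ->] := df t (ltW dt).
  by rewrite subr_gt0; apply: hphi; rewrite !ltW.
- apply: continuous_in_subspaceT => t; rewrite inE/= in_itv/= => /andP[dt _].
  apply: differentiable_continuous; apply/derivable1_diffP.
  by case: (df t dt).
- exact: ds1.
- exact: s12.
- exact: s2d.
Qed.
End IntMono.

Lemma openXT (R : realType) (T : topologicalType) (I : set R) : open I -> open (I `*` [set: T]).
Proof.
move=> oI; rewrite openE => -[a b] /= [Ia _]; rewrite /interior.
exists (I, [set: T]); last by move=> [? ?] [].
by split => //=; [exact: open_nbhs_nbhs|exact: filterT].
Qed.

Lemma part2 (R : realType) (Z : topologicalType) (H : R * Z -> Z)
  (hH : continuous H) (hact : is_R_action H)
  (T1 T2 : topologicalType) (U1 U2 : set Z) (I1 I2 : set R)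
      (phi1 : Z -> R * T1) (psi1 : R * T1 -> Z)
      (phi2 : Z -> R * T2) (psi2 : R * T2 -> Z) :
      flow_chart H U1 I1 phi1 psi1 -> flow_chart H U2 I2 phi2 psi2 ->
      forall p : Z, U1 p -> U2 p ->
      exists (Iv : set R) (Tv : set T1) (sigma : T1 -> R) (theta : T1 -> T2),
        [/\ open Iv, Iv (phi1 p).1 & Iv `<=` I1] /\
        [/\ open Tv, Tv (phi1 p).2, {within Tv, continuous sigma} &
            {within Tv, continuous theta}] /\
            forall (s : R) (tau : T1), Iv s -> Tv tau ->
              U2 (psi1 (s, tau)) /\
              phi2 (psi1 (s, tau)) = (s + sigma tau, theta tau).
Proof.
rewrite /flow_chart => -[[oU1 oI1 I10] [[cphi1 cpsi1] [inv11 [inv12 tr1]]]].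
move=> -[[oU2 oI2 I20] [[cphi2 cpsi2] [inv21 [inv22 tr2]]]].
move=> p U1p U2p.
have H0 z : H (0, z) = z by case: hact.
case E1 : (phi1 p) => [s0 tau0].
have [[Is0 _] pE] := inv11 p U1p; rewrite E1 in Is0 pE.
have [A1 B1] := (tr1 p U1p, tr2 p U2p).
case: A1 => -[A1 B1'] /= [nA1 nB1] sAB1.
case: B1 => -[A2 B2] /= [nA2 nB2] sAB2.
have nH : \forall q \near (0, p), (U1 `&` U2) (H q).
  by apply: hH; rewrite H0; apply: open_nbhs_nbhs; split => //; exact: openI.
case: nH => -[A3 B3] /= [nA3 nB3] sAB3.
have nA : nbhs (0:R) (A1 `&` A2 `&` A3) by apply: filterI => //; apply: filterI.
case/nbhs_ballP: nA => r r0 bA.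
pose N := B1' `&` B2 `&` B3 `&` U1 `&` U2.
have nN : nbhs p N.
  apply: filterI; last exact: open_nbhs_nbhs.
  apply: filterI; last exact: open_nbhs_nbhs.
  by apply: filterI => //; apply: filterI.
pose j (tau : T1) := psi1 (s0, tau).
have cj : continuous j.
  move=> tau; apply: continuous_comp; first exact: pairR_cont.
  rewrite continuous_open_subspace in cpsi1; last exact: openXT.
  by apply: cpsi1; apply: mem_set.
have cphi2' : {in U2, continuous phi2}.
  by rewrite -continuous_open_subspace.
have jtau0 : j tau0 = p by rewrite /j -pE.
pose Tv := j @^-1` N°.
have oTv : open Tv by move/continuousP: cj; apply; exact: open_interior.
have Tv0 : Tv tau0 by rewrite /Tv/= jtau0; exact: nN.
have TvN tau : Tv tau -> N (j tau) by move=> /interior_subset.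
pose Iv := ball s0 r `&` I1.
exists Iv, Tv, (fun tau => (phi2 (j tau)).1 - s0), (fun tau => (phi2 (j tau)).2).
split; [split|split; [split|]].
- by apply: openI => //; exact: ball_open.
- by split => //; exact: ballxx.
- by move=> ? [].
- exact: oTv.
- exact: Tv0.
- rewrite continuous_open_subspace// => tau /set_mem Ttau.
  have [[[[_ _] _] _] U2j] := TvN tau Ttau.
  have cpj : {for tau, continuous (fun t => phi2 (j t))}.
    exact: (continuous_comp (cj tau) (cphi2' _ (mem_set U2j))).
  apply: cvgB; last exact: cvg_cst.
  by apply: (continuous_comp cpj); exact: cvg_fst.
- rewrite continuous_open_subspace// => tau /set_mem Ttau.
  have [[[[_ _] _] _] U2j] := TvN tau Ttau.
  have cpj : {for tau, continuous (fun t => phi2 (j t))}.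
    exact: (continuous_comp (cj tau) (cphi2' _ (mem_set U2j))).
  by apply: (continuous_comp cpj); exact: cvg_snd.
move=> s tau [bs Is] Ttau.
have [[[[B1w B2w] B3w] U1w] U2w] := TvN tau Ttau.
set w := j tau in B1w B2w B3w U1w U2w *.
have At : (A1 `&` A2 `&` A3) (s - s0).
  apply: bA; rewrite /ball/= sub0r normrN -opprB normrN; exact: bs.
case: At => -[At1 At2] At3.
have [U1H U2H] := sAB3 (s - s0, w) (conj At3 B3w).
have h1 := sAB1 (s - s0, w) (conj At1 B1w); rewrite /= in h1.
have h2 := sAB2 (s - s0, w) (conj At2 B2w); rewrite /= in h2.
have pw : phi1 w = (s0, tau) by rewrite /w /j; apply: (proj2 (inv12 _ _)).
rewrite pw /= in h1; rewrite (_ : s0 + (s - s0) = s) in h1; last by rewrite addrC subrK.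
have ps : psi1 (s, tau) = H (s - s0, w).
  by rewrite -h1; have [_ ->] := inv11 _ U1H.
rewrite ps; split => //.
by rewrite h2; congr pair; lra.
Qed.

Theorem lemma5p1 (R : realType) (Z : topologicalType) (H : R * Z -> Z)
  (hZ : completely_hausdorff R Z) (hH : continuous H)
  (hact : is_R_action H) (hfree : locally_free H) :
  (forall x : Z, exists (T : topologicalType) (U : set Z) (I : set R)
      (phi : Z -> R * T) (psi : R * T -> Z),
      [/\ U x, flow_chart H U I phi psi & (phi x).1 = 0])
  /\
  (forall (T1 T2 : topologicalType) (U1 U2 : set Z) (I1 I2 : set R)
      (phi1 : Z -> R * T1) (psi1 : R * T1 -> Z)
      (phi2 : Z -> R * T2) (psi2 : R * T2 -> Z),
      flow_chart H U1 I1 phi1 psi1 -> flow_chart H U2 I2 phi2 psi2 ->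
      forall p : Z, U1 p -> U2 p ->
      exists (Iv : set R) (Tv : set T1) (sigma : T1 -> R) (theta : T1 -> T2),
        [/\ open Iv, Iv (phi1 p).1 & Iv `<=` I1] /\
        [/\ open Tv, Tv (phi1 p).2, {within Tv, continuous sigma} &
            {within Tv, continuous theta}] /\
            forall (s : R) (tau : T1), Iv s -> Tv tau ->
              U2 (psi1 (s, tau)) /\
              phi2 (psi1 (s, tau)) = (s + sigma tau, theta tau)).
Proof.
split; last first.
  move=> T1 T2 U1 U2 I1 I2 phi1 psi1 phi2 psi2 c1 c2 p h1 h2.
  exact: (part2 hH hact c1 c2 h1 h2).
move=> x.
have H0 z : H (0, z) = z by case: hact.
have HD t s z : H (t + s, z) = H (t, H (s, z)) by case: hact.
have [eta eta0 heta] := hfree x.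
pose e := eta / 2.
have e0 : 0 < e by rewrite divr_gt0.
have neq : x <> H (e, x).
  move=> he; have : e = 0.
    apply: heta; last by rewrite -he.
    rewrite ger0_norm ?ltW// /e; lra.
  by move=> e00; rewrite e00 ltxx in e0.
have [f [cf fne]] := hZ _ _ neq.
have [f' [cf' flt]] : exists f' : Z -> R, continuous f' /\ f' x < f' (H (e, x)).
  case: (ltgtP (f x) (f (H (e, x)))) => [lt|gt|eq].
  - by exists f.
  - exists (fun z => - f z); split; last by rewrite ltrN2.
    by move=> z; apply: cvgN; exact: cf.
  - by move: fne; rewrite eq.
pose G (q : R * Z) := f' (H q).
have cG : continuous G by move=> q; apply: continuous_comp; [exact: hH|exact: cf'].
pose g z := \int[lebesgue_measure]_(t in `[0, e]) G (t, z).
have cg : continuous g by apply: int_cont => //; exact: ltW.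
pose K (q : R * Z) := G (q.1 + e, q.2) - G q.
have cK : continuous K.
  move=> q; apply: cvgB; last exact: cG.
  apply: (@continuous_comp _ _ _ (fun q : R * Z => (q.1 + e, q.2)) G); last exact: cG.
  apply: (@cvg_pair _ _ _ (nbhs q) (nbhs (q.1 + e)) (nbhs q.2)); last exact: cvg_snd.
  by apply: cvgD; [exact: cvg_fst| exact: cvg_cst].
have K0 : 0 < K (0, x) by rewrite /K /G /= add0r H0 subr_gt0.
have nK : \forall q \near (0, x), 0 < K q by exact: (cvgr_gt _ (cK (0, x)) _ K0).
case: nK => -[A B] /= [nA nB] sAB.
case/nbhs_ballP: nA => r r0 bA.
rewrite nbhsE in nB; case: nB => W0 [oW0 W0x] W0B.
pose d := r / 4.
have d0 : 0 < d by rewrite divr_gt0.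
apply: (@chart_main R Z H hH hact x g W0 d cg oW0 W0x d0).
move=> w W0w s1 s2 h1 h12 h2.
have cfw : continuous (fun u => f' (H (u, w))).
  by move=> u; apply: (@continuous_comp _ _ _ (fun u => (u, w)) G); [exact: pairL_cont| exact: cG].
have E s : g (H (s, w)) = \int[lebesgue_measure]_(t in `[0, e]) (fun u => f' (H (u, w))) (t + s).
  by rewrite /g; apply: eq_Rintegral => t _; rewrite /G /= HD.
rewrite !E; apply: (int_mono cfw e0 (_ : 0 < 2 * d)) => //.
  by rewrite mulr_gt0.
move=> s /andP[sl sr].
have : 0 < K (s, w).
  apply: (sAB (s, w)); split => //=; last exact: W0B.
  have dr : d * 4 = r by rewrite /d divfK// pnatr_eq0.
  apply: bA; rewrite /ball/= sub0r normrN ltr_norml; apply/andP; split; lra.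
by rewrite /K /G /= subr_gt0.
Qed.
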